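(* Let $R$ be a $*$-ring and $C(R)=\{a\in R\mid ax=xa \text{ for all } x\in R\}$ its center, regarded as a $*$-ring with the restricted involution. Then $R$ is strongly $J$-$*$-clean if and only if (1) $C(R)$ is $J$-$*$-clean, and (2) $R=C(R)+J(R)$.
   Context: All rings are associative with identity. A $*$-ring is a ring $R$ with an involution $*$, i.e. a map $a\mapsto a^*$ with $(a+b)^*=a^*+b^*$, $(ab)^*=b^*a^*$, $(a^* )^*=a$; the center $C(R)$ is closed under $*$. $J(S)$ denotes the Jacobson radical of a ring $S$. A projection is an element $e$ with $e^2=e=e^*$. $R$ is strongly $J$-$*$-clean if every $a\in R$ can be written $a=e+u$ with $e$ a projection, $u\in J(R)$ and $ae=ea$. A $*$-ring $S$ is $J$-$*$-clean if every element of $S$ is the sum of a projection of $S$ and an element of $J(S)$ (no commutation required). *)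

(* Defs.v *)
From mathcomp Require Import all_boot all_algebra.
Set Implicit Arguments. Unset Strict Implicit. Unset Printing Implicit Defensive.
Import GRing.Theory.
Local Open Scope ring_scope.

Definition is_involution (R : pzRingType) (s : R -> R) : Prop :=
  (forall a b : R, s (a + b) = s a + s b) /\
  (forall a b : R, s (a * b) = s b * s a) /\
  (forall a : R, s (s a) = a).

Definition central (R : pzRingType) (a : R) : Prop := forall x : R, a * x = x * a.

(* Subrings are given as predicates S : R -> Prop (we use S = whole ring and
   S = center).  [unit_in S a]: a is invertible in the ring S. *)
Definition unit_in (R : pzRingType) (S : R -> Prop) (a : R) : Prop :=
  exists2 y, S y & (y * a = 1 /\ a * y = 1).

Definition jacobson_in (R : pzRingType) (S : R -> Prop) (a : R) : Prop :=
  S a /\ forall x : R, S x -> unit_in S (1 - x * a).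

Definition whole (R : pzRingType) : R -> Prop := fun _ => True.

Definition jacobson (R : pzRingType) (a : R) : Prop := jacobson_in (@whole R) a.

Definition projection (R : pzRingType) (s : R -> R) (e : R) : Prop :=
  e * e = e /\ s e = e.

Definition strongly_J_star_clean (R : pzRingType) (s : R -> R) : Prop :=
  forall a : R, exists e u : R,
    [/\ projection s e, jacobson u, a = e + u & a * e = e * a].

Definition center_J_star_clean (R : pzRingType) (s : R -> R) : Prop :=
  forall a : R, central a -> exists e u : R,
    [/\ central e, projection s e, jacobson_in (@central R) u & a = e + u].

Definition center_plus_jacobson (R : pzRingType) : Prop :=
  forall a : R, exists c u : R, [/\ central c, jacobson u & a = c + u].

(* Main.v *)
Require Import Defs.
From mathcomp Require Import all_boot all_algebra.
Set Implicit Arguments. Unset Strict Implicit. Unset Printing Implicit Defensive.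
Import GRing.Theory.
Local Open Scope ring_scope.

Section H.
Variable R : pzRingType.
Implicit Types a b x y u e p g : R.

Lemma unitM a b : unit_in (@whole R) a -> unit_in (@whole R) b -> unit_in (@whole R) (a*b).
Proof.
move=> [ya _ [ha1 ha2]] [yb _ [hb1 hb2]]; exists (yb*ya) => //; split.
- by rewrite mulrA -(mulrA yb) ha1 mulr1.
- by rewrite mulrA -(mulrA a) hb2 mulr1.
Qed.

Lemma cancel_r x g : unit_in (@whole R) g -> x*g = 0 -> x = 0.
Proof. by move=> [y _ [_ h]] e; rewrite -(mulr1 x) -h mulrA e mul0r. Qed.

Lemma jac_mull y u : jacobson u -> jacobson (y*u).
Proof. by move=> [_ h]; split=> // x _; rewrite mulrA; apply: h. Qed.

Lemma jac_add a b : jacobson a -> jacobson b -> jacobson (a+b).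
Proof.
move=> [_ ha] ja; split=> // x _.
have [w _ [w1 w2]] := ha x I.
have -> : 1 - x*(a+b) = (1 - x*a) * (1 - (w*x)*b).
  by rewrite mulrBr mulr1 !mulrA w2 mul1r mulrDr opprD addrA.
apply: unitM; first exact: ha.
by case: (jac_mull (w*x) ja) => _ h; rewrite -(mul1r (_ * b)); apply: h.
Qed.

Lemma idem_jac x y u : x*x = x -> jacobson u -> x = y*u -> x = 0.
Proof.
move=> xx [_ hu] exy; apply: (@cancel_r x (1 - y*u)); first exact: hu.
by rewrite mulrBr mulr1 -exy xx subrr.
Qed.

Lemma idemM a f : a*a = a -> f*f = f -> a*f = f*a -> (a*f)*(a*f) = a*f.
Proof. by move=> aa ff af; rewrite -mulrA (mulrA f) -af -mulrA ff mulrA aa. Qed.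

Lemma idemC e : e*e = e -> (1-e)*(1-e) = 1-e.
Proof. by move=> ee; rewrite mulrBr mulr1 mulrBl mul1r ee subrr subr0. Qed.

Lemma idem_eq a e u : a*a = a -> e*e = e -> a = e + u -> jacobson u ->
  a*e = e*a -> a = e.
Proof.
move=> aa ee aeu ju ae.
have ua : u*a = a*u.
  have -> : u = a - e by rewrite aeu addrC addKr.
  by rewrite mulrBl mulrBr ae.
have ue : u*e = e*u.
  have -> : u = a - e by rewrite aeu addrC addKr.
  by rewrite mulrBl mulrBr ae.
have h1 : a*(1-e) = 0.
  apply: (idem_jac (y:=1-e) _ ju).
    apply: idemM => //; first exact: idemC.
    by rewrite mulrBr mulrBl mulr1 mul1r ae.
  rewrite aeu mulrDl mulrBr mulr1 ee subrr add0r mulrBr mulrBl mulr1 mul1r ue.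
  by [].
have h2 : e*(1-a) = 0.
  apply: (idem_jac (y:=a-1) _ ju).
    apply: idemM => //; first exact: idemC.
    by rewrite mulrBr mulrBl mulr1 mul1r ae.
  have -> : e = a - u by rewrite aeu addrK.
  rewrite mulrBl !mulrBr !mulr1 aa subrr sub0r ua mulrBl mul1r opprB //.
move: h1 h2; rewrite !mulrBr !mulr1 => /eqP; rewrite subr_eq0 => /eqP h1.
move=> /eqP; rewrite subr_eq0 => /eqP h2.
by rewrite {1}h1 ae -h2.
Qed.

Variable s : R -> R.
Hypothesis hs : is_involution s.

Lemma s0 : s 0 = 0.
Proof.
case: hs => hD _; have h := hD 0 0; rewrite addr0 in h.
by apply: (@addrI _ (s 0)); rewrite addr0 -h.
Qed.

Lemma sN a : s (- a) = - s a.
Proof.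
case: hs => hD _; apply/eqP; rewrite -subr_eq0 opprK -hD addNr s0 //.
Qed.

Lemma sB a b : s (a - b) = s a - s b.
Proof. by case: hs => hD _; rewrite hD sN. Qed.

Lemma s1 : s 1 = 1.
Proof.
case: hs => _ [hM hK]; have := hM (s 1) 1.
by rewrite mulr1 !hK mulr1 => h; rewrite -h.
Qed.

Lemma proj_central p : strongly_J_star_clean s -> projection s p -> central p.
Proof.
move=> sc [pp sp].
case: (hs) => hD [hM hK].
have key : forall x, p*x*(1-p) = 0.
  move=> x; set q := p*x*(1-p).
  have pq : p*q = q by rewrite /q !mulrA pp.
  have qp : q*p = 0 by rewrite /q -mulrA mulrBl mul1r pp subrr mulr0.
  have qq : q*q = 0 by rewrite -{2}pq mulrA qp mul0r.
  have [e [u [[ee se] ju aeu ae]]] := sc (p+q).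
  have aa : (p+q)*(p+q) = p+q.
    by rewrite mulrDl !mulrDr pp pq qp qq addr0 addr0.
  have := idem_eq aa ee aeu ju ae => hpe.
  have sq : s q = q.
    by have := se; rewrite -hpe hD sp => /addrI.
  have sq' : s q = (1-p) * s x * p.
    by rewrite /q !hM sp hD sN s1 sp mulrA.
  have p1p : p*(1-p) = 0 by rewrite mulrBr mulr1 pp subrr.
  transitivity (p * s q); first by rewrite sq pq.
  by rewrite sq' !mulrA p1p !mul0r.
move=> x.
have h1 : p*x = p*x*p by have := key x; rewrite mulrBr mulr1 => /eqP; rewrite subr_eq0 => /eqP.
have h2 : x*p = p*x*p.
  have := key (s x); rewrite mulrBr mulr1 => /eqP; rewrite subr_eq0 => /eqP h.
  have := congr1 s h; rewrite !hM hK sp => ->; by rewrite mulrA.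
by rewrite h1 h2.
Qed.

Lemma central_inv a y : central a -> y*a = 1 -> a*y = 1 -> central y.
Proof.
move=> ca ya ay z.
rewrite -[y*z]mulr1 -ay mulrA -[y * z * a]mulrA -ca.
by rewrite [y * (a * z)]mulrA ya mul1r.
Qed.

End H.

Theorem corollary2p3 (R : pzRingType) (s : R -> R) (hs : is_involution s) :
  strongly_J_star_clean s <->
  (center_J_star_clean s /\ center_plus_jacobson R).
Proof.
split.
- move=> sc; split.
  + move=> a ca; have [e [u [pe ju aeu ae]]] := sc a.
    have ce := proj_central hs sc pe.
    have cu : central u.
      have -> : u = a - e by rewrite aeu addrC addKr.
      by move=> x; rewrite mulrBl mulrBr ca ce.
    exists e, u; split=> //; split=> // x cx.
    have [y _ [y1 y2]] := ju.2 x I.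
    exists y => //; apply: (central_inv _ y1 y2).
    by move=> z; rewrite mulrBl mulrBr mul1r mulr1 -mulrA cu !mulrA cx.
  + move=> a; have [e [u [pe ju aeu _]]] := sc a.
    by exists e, u; split=> //; apply: (proj_central hs sc pe).
- move=> [cc cj] a.
  have [c [j [ccen jj acj]]] := cj a.
  have [e [v [ce pe [cv hv] cev]]] := cc c ccen.
  have jv : jacobson v.
    split=> // x _.
    have [c' [j' [cc' jj' xe]]] := cj x.
    have [w _ [w1 w2]] := hv c' cc'.
    have -> : 1 - x*v = (1 - c'*v) * (1 - (w*v)*j').
      by rewrite mulrBr mulr1 !mulrA w2 mul1r xe mulrDl (cv j') opprD addrA.
    apply: unitM; first by exists w.
    exact: jj'.2.
  exists e, (v + j); split=> //; first exact: jac_add.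
  by rewrite acj cev addrA.
Qed.
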